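(* Every $\mathbb{B}$-sober bitopological space is d-sober, and hence join sober (i.e. the topological space $(X,\tau[tt]\vee\tau[ff])$ is sober).
   Context: $\mathbb{B}=\{0,1,tt,ff\}$ is the four-element Boolean algebra with bottom $0$, top $1$, and $tt,ff$ incomparable complements. A bitopological space $(X,\tau[tt],\tau[ff])$ is identified with the $\mathbb{B}$-topology $\tau=\{\lambda\colon X\to\mathbb{B}: \lambda[tt]\in\tau[tt],\ \lambda[ff]\in\tau[ff]\}$, where $\lambda[b]=\{x:\lambda(x)\ge b\}$; $b_X$ is the constant map with value $b$. A $\mathbb{B}$-point of $\tau$ is a frame homomorphism $p\colon\tau\to\mathbb{B}$ with $p(b_X)=b$ for all $b$; the space is $\mathbb{B}$-sober if for every $\mathbb{B}$-point $p$ there is a unique $x$ with $p(\lambda)=\lambda(x)$ for all $\lambda\in\tau$. A d-point of $(X,\tau[tt],\tau[ff])$ is a pair of frame homomorphisms $p_{tt}\colon\tau[tt]\to\{0,1\}$, $p_{ff}\colon\tau[ff]\to\{0,1\}$ such that: if $U\in\tau[tt]$, $V\in\tau[ff]$ and $U\cap V=\emptyset$ then $p_{tt}(U)=0$ or $p_{ff}(V)=0$; and if $U\cup V=X$ then $p_{tt}(U)=1$ or $p_{ff}(V)=1$. Each $x\in X$ gives the d-point $[x]$ with $[x]_{tt}(U)=1\iff x\in U$, $[x]_{ff}(V)=1\iff x\in V$. The space is d-sober if every d-point equals $[x]$ for a unique $x$. A topological space is sober if every irreducible closed set is the closure of a unique point. *)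

(* Defs.v *)
From Stdlib Require Import Bool.

Definition is_topology {X : Type} (T : (X -> Prop) -> Prop) : Prop :=
  T (fun _ => True) /\
  (forall U V, T U -> T V -> T (fun x => U x /\ V x)) /\
  (forall (I : Type) (F : I -> X -> Prop),
      (forall i, T (F i)) -> T (fun x => exists i, F i x)).

Inductive B : Type := B0 | B1 | Btt | Bff.

Definition Ble (a b : B) : Prop := a = B0 \/ b = B1 \/ a = b.

Definition is_lub_B {I : Type} (f : I -> B) (b : B) : Prop :=
  (forall i, Ble (f i) b) /\ (forall c, (forall i, Ble (f i) c) -> Ble b c).

Definition is_glb2_B (a b c : B) : Prop :=
  Ble c a /\ Ble c b /\ (forall d, Ble d a -> Ble d b -> Ble d c).

Definition cut {X : Type} (l : X -> B) (b : B) : X -> Prop := fun x => Ble b (l x).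

(** The B-topology tau associated with the bitopological space (X, Ttt, Tff). *)
Definition Btop {X : Type} (Ttt Tff : (X -> Prop) -> Prop) (l : X -> B) : Prop :=
  Ttt (cut l Btt) /\ Tff (cut l Bff).

Definition Fle {X : Type} (l m : X -> B) : Prop := forall x, Ble (l x) (m x).

Definition is_lub_tau {X : Type} (Ttt Tff : (X -> Prop) -> Prop)
  {I : Type} (F : I -> X -> B) (l : X -> B) : Prop :=
  Btop Ttt Tff l /\ (forall i, Fle (F i) l) /\
  (forall m, Btop Ttt Tff m -> (forall i, Fle (F i) m) -> Fle l m).

Definition is_glb2_tau {X : Type} (Ttt Tff : (X -> Prop) -> Prop)
  (l m n : X -> B) : Prop :=
  Btop Ttt Tff n /\ Fle n l /\ Fle n m /\
  (forall k, Btop Ttt Tff k -> Fle k l -> Fle k m -> Fle k n).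

Definition frame_hom_B {X : Type} (Ttt Tff : (X -> Prop) -> Prop)
  (p : (X -> B) -> B) : Prop :=
  p (fun _ => B1) = B1 /\
  (forall l m n, Btop Ttt Tff l -> Btop Ttt Tff m -> is_glb2_tau Ttt Tff l m n ->
     is_glb2_B (p l) (p m) (p n)) /\
  (forall (I : Type) (F : I -> X -> B) (l : X -> B),
     (forall i, Btop Ttt Tff (F i)) -> is_lub_tau Ttt Tff F l ->
     is_lub_B (fun i => p (F i)) (p l)).

Definition B_point {X : Type} (Ttt Tff : (X -> Prop) -> Prop)
  (p : (X -> B) -> B) : Prop :=
  frame_hom_B Ttt Tff p /\ (forall b, p (fun _ => b) = b).

Definition B_sober {X : Type} (Ttt Tff : (X -> Prop) -> Prop) : Prop :=
  forall p, B_point Ttt Tff p ->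
    exists! x : X, forall l, Btop Ttt Tff l -> p l = l x.

Definition frame_hom_2 {X : Type} (T : (X -> Prop) -> Prop)
  (q : (X -> Prop) -> bool) : Prop :=
  q (fun _ => True) = true /\
  (forall U V, T U -> T V -> q (fun x => U x /\ V x) = q U && q V) /\
  (forall (I : Type) (F : I -> X -> Prop), (forall i, T (F i)) ->
     (q (fun x => exists i, F i x) = true <-> exists i, q (F i) = true)).

Definition d_point {X : Type} (Ttt Tff : (X -> Prop) -> Prop)
  (ptt pff : (X -> Prop) -> bool) : Prop :=
  frame_hom_2 Ttt ptt /\ frame_hom_2 Tff pff /\
  (forall U V, Ttt U -> Tff V -> (forall x, ~ (U x /\ V x)) ->
     ptt U = false \/ pff V = false) /\
  (forall U V, Ttt U -> Tff V -> (forall x, U x \/ V x) ->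
     ptt U = true \/ pff V = true).

Definition d_point_at {X : Type} (Ttt Tff : (X -> Prop) -> Prop)
  (ptt pff : (X -> Prop) -> bool) (x : X) : Prop :=
  (forall U, Ttt U -> (ptt U = true <-> U x)) /\
  (forall V, Tff V -> (pff V = true <-> V x)).

Definition d_sober {X : Type} (Ttt Tff : (X -> Prop) -> Prop) : Prop :=
  forall ptt pff, d_point Ttt Tff ptt pff ->
    exists! x : X, d_point_at Ttt Tff ptt pff x.

Definition join_top {X : Type} (T1 T2 : (X -> Prop) -> Prop) : (X -> Prop) -> Prop :=
  fun U => forall T, is_topology T -> (forall V, T1 V -> T V) ->
                     (forall V, T2 V -> T V) -> T U.

Definition closed_in {X : Type} (T : (X -> Prop) -> Prop) (C : X -> Prop) : Prop :=
  T (fun x => ~ C x).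

Definition irreducible_closed {X : Type} (T : (X -> Prop) -> Prop) (C : X -> Prop) : Prop :=
  closed_in T C /\ (exists x, C x) /\
  (forall C1 C2, closed_in T C1 -> closed_in T C2 ->
     (forall x, C x -> C1 x \/ C2 x) ->
     (forall x, C x -> C1 x) \/ (forall x, C x -> C2 x)).

Definition point_closure {X : Type} (T : (X -> Prop) -> Prop) (x : X) : X -> Prop :=
  fun y => forall D, closed_in T D -> D x -> D y.

Definition sober {X : Type} (T : (X -> Prop) -> Prop) : Prop :=
  forall C, irreducible_closed T C ->
    exists! x : X, forall y, C y <-> point_closure T x y.

(* Main.v *)
Require Import Defs.
From Stdlib Require Import Bool Classical ClassicalEpsilon FunctionalExtensionality PropExtensionality.

Lemma set_ext {X : Type} (U V : X -> Prop) : (forall x, U x <-> V x) -> U = V.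
Proof. intros H; apply functional_extensionality; intro x; apply propositional_extensionality; auto. Qed.

Definition bP (P : Prop) : bool := if excluded_middle_informative P then true else false.
Lemma bP_true (P : Prop) : bP P = true <-> P.
Proof. unfold bP; destruct (excluded_middle_informative P); split; intuition discriminate. Qed.

Lemma iff_bool (a b : bool) : (a = true <-> b = true) -> a = b.
Proof. destruct a, b; intuition. Qed.

Definition hi (a : B) : bool := match a with Btt | B1 => true | _ => false end.
Definition hf (a : B) : bool := match a with Bff | B1 => true | _ => false end.
Definition comb (t f : bool) : B :=
  match t, f with true, true => B1 | true, false => Btt | false, true => Bff | false, false => B0 end.

Lemma hi_comb t f : hi (comb t f) = t. Proof. destruct t, f; reflexivity. Qed.
Lemma hf_comb t f : hf (comb t f) = f. Proof. destruct t, f; reflexivity. Qed.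
Lemma comb_h b : comb (hi b) (hf b) = b. Proof. destruct b; reflexivity. Qed.

Lemma Ble_iff a b : Ble a b <-> ((hi a = true -> hi b = true) /\ (hf a = true -> hf b = true)).
Proof. destruct a, b; unfold Ble; simpl; split; intuition (try discriminate; try congruence). Qed.

Lemma cut_tt {X} (l : X -> B) x : cut l Btt x <-> hi (l x) = true.
Proof. unfold cut; rewrite Ble_iff; simpl; intuition. Qed.
Lemma cut_ff {X} (l : X -> B) x : cut l Bff x <-> hf (l x) = true.
Proof. unfold cut; rewrite Ble_iff; simpl; intuition. Qed.

Lemma lub_B_char {I : Type} (g : I -> B) b :
  (hi b = true <-> exists i, hi (g i) = true) ->
  (hf b = true <-> exists i, hf (g i) = true) -> is_lub_B g b.
Proof.
  intros H1 H2; split.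
  - intro i; rewrite Ble_iff; split; intro h; [apply H1|apply H2]; eauto.
  - intros c Hc; rewrite Ble_iff; split; intro h.
    + destruct (proj1 H1 h) as [i hi']. exact (proj1 (proj1 (Ble_iff _ _) (Hc i)) hi').
    + destruct (proj1 H2 h) as [i hi']. exact (proj2 (proj1 (Ble_iff _ _) (Hc i)) hi').
Qed.

Lemma glb_B_char a b c : hi c = hi a && hi b -> hf c = hf a && hf b -> is_glb2_B a b c.
Proof.
  intros H1 H2; destruct a, b, c; simpl in H1, H2; try discriminate;
  unfold is_glb2_B, Ble; repeat split; try (intros d; destruct d); intuition discriminate.
Qed.

Lemma empty_open {X} (T : (X -> Prop) -> Prop) (E : X -> Prop) :
  is_topology T -> (forall x, ~ E x) -> T E.
Proof.
  intros [_ [_ HU]] HE.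
  replace E with (fun x => exists i : False, (fun (_ : False) (_ : X) => True) i x).
  - apply HU; intros [].
  - apply set_ext; intro x; split; [intros [[] _] | intro h; exfalso; exact (HE x h)].
Qed.

Lemma q_empty {X} (T : (X -> Prop) -> Prop) q (E : X -> Prop) :
  frame_hom_2 T q -> (forall x, ~ E x) -> q E = false.
Proof.
  intros [_ [_ HU]] HE.
  replace E with (fun x => exists i : False, (fun (_ : False) (_ : X) => True) i x).
  - destruct (q _) eqn:e; [|reflexivity].
    destruct (proj1 (HU False _ (fun i => match i with end)) e) as [[] _].
  - apply set_ext; intro x; split; [intros [[] _] | intro h; exfalso; exact (HE x h)].
Qed.

Lemma q_full {X} (T : (X -> Prop) -> Prop) q (E : X -> Prop) :
  frame_hom_2 T q -> (forall x, E x) -> q E = true.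
Proof.
  intros [H _] HE. replace E with (fun _ : X => True). exact H.
  apply set_ext; intuition.
Qed.

Section DS.
Context {X : Type} (Ttt Tff : (X -> Prop) -> Prop)
  (Htt : is_topology Ttt) (Hff : is_topology Tff).

Lemma glb_pointwise l m n : Btop Ttt Tff l -> Btop Ttt Tff m -> is_glb2_tau Ttt Tff l m n ->
  forall x, hi (n x) = hi (l x) && hi (m x) /\ hf (n x) = hf (l x) && hf (m x).
Proof.
  intros [l1 l2] [m1 m2] [Hn [Hnl [Hnm Hk]]].
  set (k := fun x => comb (hi (l x) && hi (m x)) (hf (l x) && hf (m x))).
  assert (Bk : Btop Ttt Tff k).
  { split.
    - replace (cut k Btt) with (fun x => cut l Btt x /\ cut m Btt x).
      + apply Htt; auto.
      + apply set_ext; intro x; rewrite !cut_tt; unfold k; rewrite hi_comb, andb_true_iff; tauto.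
    - replace (cut k Bff) with (fun x => cut l Bff x /\ cut m Bff x).
      + apply Hff; auto.
      + apply set_ext; intro x; rewrite !cut_ff; unfold k; rewrite hf_comb, andb_true_iff; tauto. }
  assert (Hkn := Hk k Bk).
  intro x.
  assert (A1 : Fle k l).
  { intro y; unfold k; rewrite Ble_iff, hi_comb, hf_comb, !andb_true_iff; tauto. }
  assert (A2 : Fle k m).
  { intro y; unfold k; rewrite Ble_iff, hi_comb, hf_comb, !andb_true_iff; tauto. }
  specialize (Hkn A1 A2 x). specialize (Hnl x). specialize (Hnm x).
  rewrite Ble_iff in Hkn, Hnl, Hnm. unfold k in Hkn. rewrite hi_comb, hf_comb in Hkn.
  split; apply iff_bool; rewrite andb_true_iff; intuition.
Qed.

Lemma lub_pointwise {I : Type} (F : I -> X -> B) l :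
  (forall i, Btop Ttt Tff (F i)) -> is_lub_tau Ttt Tff F l ->
  forall x, (hi (l x) = true <-> exists i, hi (F i x) = true) /\
            (hf (l x) = true <-> exists i, hf (F i x) = true).
Proof.
  intros HF [Hl [HFl Hlm]].
  set (k := fun x => comb (bP (exists i, hi (F i x) = true)) (bP (exists i, hf (F i x) = true))).
  assert (Bk : Btop Ttt Tff k).
  { split.
    - replace (cut k Btt) with (fun x => exists i, cut (F i) Btt x).
      + apply Htt; intro i; apply HF.
      + apply set_ext; intro x; rewrite !cut_tt; unfold k; rewrite hi_comb, bP_true.
        split; intros [i h]; exists i; apply cut_tt; auto; apply cut_tt; auto.
    - replace (cut k Bff) with (fun x => exists i, cut (F i) Bff x).
      + apply Hff; intro i; apply HF.
      + apply set_ext; intro x; rewrite !cut_ff; unfold k; rewrite hf_comb, bP_true.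
        split; intros [i h]; exists i; apply cut_ff; auto; apply cut_ff; auto. }
  assert (Hlk : Fle l k).
  { apply Hlm; auto. intros i y; unfold k; rewrite Ble_iff, hi_comb, hf_comb, !bP_true.
    split; intro; eauto. }
  intro x. specialize (Hlk x). rewrite Ble_iff in Hlk. unfold k in Hlk.
  rewrite hi_comb, hf_comb, !bP_true in Hlk.
  split; split; try tauto; intros [i h]; pose proof (proj1 (Ble_iff _ _) (HFl i x)); firstorder.
Qed.

Definition pB (ptt pff : (X -> Prop) -> bool) (l : X -> B) : B :=
  comb (ptt (cut l Btt)) (pff (cut l Bff)).

Lemma pB_point ptt pff : frame_hom_2 Ttt ptt -> frame_hom_2 Tff pff ->
  B_point Ttt Tff (pB ptt pff).
Proof.
  intros Ht Hf. split; [split; [|split]|].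
  - unfold pB. rewrite (q_full _ _ _ Ht), (q_full _ _ _ Hf); try reflexivity;
    intro; unfold cut, Ble; auto.
  - intros l m n Bl Bm Hg. pose proof (glb_pointwise l m n Bl Bm Hg) as P.
    destruct Bl as [l1 l2], Bm as [m1 m2].
    apply glb_B_char; unfold pB; rewrite ?hi_comb, ?hf_comb.
    + replace (cut n Btt) with (fun x => cut l Btt x /\ cut m Btt x).
      * apply (proj1 (proj2 Ht)); auto.
      * apply set_ext; intro x; rewrite !cut_tt, (proj1 (P x)), andb_true_iff; tauto.
    + replace (cut n Bff) with (fun x => cut l Bff x /\ cut m Bff x).
      * apply (proj1 (proj2 Hf)); auto.
      * apply set_ext; intro x; rewrite !cut_ff, (proj2 (P x)), andb_true_iff; tauto.
  - intros I F l HF Hl. pose proof (lub_pointwise F l HF Hl) as P.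
    apply lub_B_char; unfold pB; rewrite ?hi_comb, ?hf_comb.
    + replace (cut l Btt) with (fun x => exists i, cut (F i) Btt x).
      * eapply iff_trans; [apply (proj2 (proj2 Ht)); intro i; apply HF|].
        split; intros [i h]; exists i; rewrite hi_comb in *; exact h.
      * apply set_ext; intro x; rewrite cut_tt, (proj1 (P x)).
        split; intros [i h]; exists i; apply cut_tt; auto; apply cut_tt; auto.
    + replace (cut l Bff) with (fun x => exists i, cut (F i) Bff x).
      * eapply iff_trans; [apply (proj2 (proj2 Hf)); intro i; apply HF|].
        split; intros [i h]; exists i; rewrite hf_comb in *; exact h.
      * apply set_ext; intro x; rewrite cut_ff, (proj2 (P x)).
        split; intros [i h]; exists i; apply cut_ff; auto; apply cut_ff; auto.
  - intro b; unfold pB; destruct b;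
    repeat first [ rewrite (q_full _ _ _ Ht) by (intro; unfold cut, Ble; auto)
                 | rewrite (q_full _ _ _ Hf) by (intro; unfold cut, Ble; auto)
                 | rewrite (q_empty _ _ _ Ht) by (intro; unfold cut, Ble; intuition discriminate)
                 | rewrite (q_empty _ _ _ Hf) by (intro; unfold cut, Ble; intuition discriminate) ];
    reflexivity.
Qed.

Lemma dsober_of : B_sober Ttt Tff -> d_sober Ttt Tff.
Proof.
  intros HB ptt pff [Ht [Hf _]].
  destruct (HB _ (pB_point ptt pff Ht Hf)) as [x [Hx Hu]].
  exists x; split.
  - split.
    + intros U HU.
      set (lam := fun y => comb (bP (U y)) false).
      assert (c1 : cut lam Btt = U).
      { apply set_ext; intro y; rewrite cut_tt; unfold lam; rewrite hi_comb, bP_true; tauto. }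
      assert (c2 : forall y, ~ cut lam Bff y).
      { intro y; rewrite cut_ff; unfold lam; rewrite hf_comb; discriminate. }
      assert (Bl : Btop Ttt Tff lam).
      { split; [rewrite c1; exact HU | apply empty_open; auto]. }
      pose proof (f_equal hi (Hx lam Bl)) as E. unfold pB in E.
      rewrite c1, hi_comb in E. unfold lam in E; rewrite hi_comb in E.
      rewrite E; apply bP_true.
    + intros U HU.
      set (lam := fun y => comb false (bP (U y))).
      assert (c1 : cut lam Bff = U).
      { apply set_ext; intro y; rewrite cut_ff; unfold lam; rewrite hf_comb, bP_true; tauto. }
      assert (c2 : forall y, ~ cut lam Btt y).
      { intro y; rewrite cut_tt; unfold lam; rewrite hi_comb; discriminate. }
      assert (Bl : Btop Ttt Tff lam).
      { split; [apply empty_open; auto | rewrite c1; exact HU]. }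
      pose proof (f_equal hf (Hx lam Bl)) as E. unfold pB in E.
      rewrite c1, hf_comb in E. unfold lam in E; rewrite hf_comb in E.
      rewrite E; apply bP_true.
  - intros y [Hy1 Hy2]. apply Hu. intros l [l1 l2].
    unfold pB. rewrite <- (comb_h (l y)). f_equal; apply iff_bool.
    + rewrite (Hy1 _ l1); apply cut_tt.
    + rewrite (Hy2 _ l2); apply cut_ff.
Qed.

End DS.

Section SOB.
Context {X : Type} (Ttt Tff : (X -> Prop) -> Prop).
Let J := join_top Ttt Tff.

Lemma J_top : is_topology J.
Proof.
  split; [|split].
  - intros T HT _ _; apply HT.
  - intros U V HU HV T HT h1 h2; apply HT; [apply HU|apply HV]; auto.
  - intros I F HF T HT h1 h2; apply HT; intro i; apply HF; auto.
Qed.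

Lemma J_tt U : Ttt U -> J U. Proof. intros H T _ h _; auto. Qed.
Lemma J_ff U : Tff U -> J U. Proof. intros H T _ _ h; auto. Qed.

Definition meets (U C : X -> Prop) := exists y, U y /\ C y.

Lemma closed_of_open U : J U -> closed_in J (fun z => ~ U z).
Proof.
  intro H; unfold closed_in. replace (fun x => ~ ~ U x) with U; auto.
  apply set_ext; intro; split; [tauto|apply NNPP].
Qed.

Lemma meet_irred C U V : irreducible_closed J C -> J U -> J V -> meets U C -> meets V C ->
  meets (fun x => U x /\ V x) C.
Proof.
  intros [_ [_ Hirr]] HU HV [y [Uy Cy]] [z [Vz Cz]].
  apply NNPP; intro N.
  destruct (Hirr (fun x => ~ U x) (fun x => ~ V x) (closed_of_open U HU) (closed_of_open V HV))
    as [h|h].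
  - intros x Cx. apply not_and_or. intro; apply N; exists x; tauto.
  - exact (h y Cy Uy).
  - exact (h z Cz Vz).
Qed.

Lemma fh2 C T : irreducible_closed J C -> (forall U, T U -> J U) ->
  frame_hom_2 T (fun U => bP (meets U C)).
Proof.
  intros HC HTJ. split; [|split].
  - apply bP_true. destruct HC as [_ [[y Cy] _]]. exists y; auto.
  - intros U V HU HV. apply iff_bool. rewrite andb_true_iff, !bP_true. split.
    + intros [y [[a b] c]]; split; exists y; auto.
    + intros [a b]; apply meet_irred; auto.
  - intros I F HF. cbv beta. rewrite bP_true. split.
    + intros [y [[i h] c]]; exists i; apply bP_true; exists y; auto.
    + intros [i h]; apply (proj1 (bP_true _)) in h; unfold meets in *; destruct h as [y [a b]]; exists y; split; eauto.
Qed.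


Lemma sober_of : d_sober Ttt Tff -> sober J.
Proof.
  intros HD C HC.
  set (q := fun U => bP (meets U C)).
  assert (Hd : d_point Ttt Tff q q).
  { split; [apply fh2; auto; apply J_tt|split; [apply fh2; auto; apply J_ff|split]].
    - intros U V HU HV Hdis. destruct (classic (meets U C)) as [h|h].
      + right. unfold q. destruct (bP _) eqn:e; auto. apply (proj1 (bP_true _)) in e.
        destruct (meet_irred C U V HC (J_tt U HU) (J_ff V HV) h e) as [y [a _]].
        exfalso; exact (Hdis y a).
      + left. unfold q. destruct (bP _) eqn:e; auto. apply (proj1 (bP_true _)) in e; contradiction.
    - intros U V HU HV Hcov. destruct HC as [_ [[y Cy] _]]. unfold q.
      destruct (Hcov y); [left|right]; apply bP_true; exists y; auto. }
  destruct (HD q q Hd) as [x [[Hx1 Hx2] Hu]].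
  set (T' := fun W => J W /\ (meets W C <-> W x)).
  assert (HT' : is_topology T').
  { destruct J_top as [j1 [j2 j3]]. split; [|split].
    - split; auto. destruct HC as [_ [[y Cy] _]]. split; auto. intros _; exists y; auto.
    - intros U V [HU eU] [HV eV]. split; auto. split.
      + intros [y [[a b] c]]. split; [apply eU|apply eV]; exists y; auto.
      + intros [a b]. apply meet_irred; auto; [apply eU|apply eV]; auto.
    - intros I F HF. split; [apply j3; intro i; apply HF|]. split.
      + intros [y [[i h] c]]. exists i. apply (proj2 (HF i)). exists y; auto.
      + intros [i h]. destruct (proj2 (proj2 (HF i)) h) as [y [a b]]. exists y; split; eauto. }
  assert (HJ : forall W, J W -> meets W C <-> W x).
  { intros W HW. apply (HW T' HT').
    - intros V HV. split; [apply J_tt; auto|]. rewrite <- (Hx1 V HV). unfold q; apply iff_sym, bP_true.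
    - intros V HV. split; [apply J_ff; auto|]. rewrite <- (Hx2 V HV). unfold q; apply iff_sym, bP_true. }
  assert (Ccl : closed_in J C) by apply HC.
  exists x; split.
  - intro y; split.
    + intros Cy D HDc Dx. apply NNPP; intro nDy.
      apply (proj1 (HJ _ HDc)); [exists y; auto | exact Dx].
    + intro H. apply H; auto. apply NNPP; intro nCx.
      destruct (proj2 (HJ _ Ccl) nCx) as [z [a b]]; auto.
  - intros x' Hx'. apply Hu.
    assert (G : forall T, (forall U, T U -> J U) -> forall U, T U -> (q U = true <-> U x')).
    { intros T HTJ U HU. unfold q; rewrite bP_true. split.
      - intros [y [Uy Cy]]. apply NNPP; intro nU.
        exact (proj1 (Hx' y) Cy (fun z => ~ U z) (closed_of_open U (HTJ U HU)) nU Uy).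
      - intro Ux. exists x'; split; auto. apply Hx'. intros D _ h; exact h. }
    split; apply G; [apply J_tt|apply J_ff].
Qed.

End SOB.

Theorem mainTheorem8 (X : Type) (Ttt Tff : (X -> Prop) -> Prop) :
  is_topology Ttt -> is_topology Tff ->
  B_sober Ttt Tff ->
  d_sober Ttt Tff /\ sober (join_top Ttt Tff).
Proof.
  intros Ht Hf HB. assert (HD := dsober_of Ttt Tff Ht Hf HB). split; [exact HD|].
  apply sober_of; exact HD.
Qed.
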